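(* Let $\varepsilon<\varepsilon_0=1/21$ and let $B\subset\mathbb{Z}^2$ be an $\varepsilon$-rare random set. Then almost surely $\mathbb{Z}^2\setminus B$ has a unique infinite $\square$-connected component $I$, and every $\boxtimes$-connected component of $\mathbb{Z}^2\setminus I$ is finite.
   Context: $\square$-adjacency on $\mathbb{Z}^2$: $\|u-v\|_1=1$; $\boxtimes$-adjacency: $\|u-v\|_\infty=1$. A random set $B\subset\mathbb{Z}^2$ (defined on a probability space with measure $\mathbb{P}$) is $\varepsilon$-rare ($\varepsilon\ge0$) if $\mathbb{P}(A\subset B)\le\varepsilon^{\#A}$ for every finite $A\subset\mathbb{Z}^2$. *)

(* Defs.v *)
From HB Require Import structures.
From mathcomp Require Import all_boot all_order all_algebra.
From mathcomp Require Import all_classical all_reals all_analysis.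
From mathcomp Require Import finmap.
Set Implicit Arguments. Unset Strict Implicit. Unset Printing Implicit Defensive.
Import Order.TTheory GRing.Theory Num.Theory.

Definition Z2 : Type := (int * int)%type.

Local Open Scope ring_scope.

Definition adj_sq (u v : Z2) : bool :=
  (`|u.1 - v.1| + `|u.2 - v.2| == 1 :> int).

Definition adj_king (u v : Z2) : bool :=
  (Num.max `|u.1 - v.1| `|u.2 - v.2| == 1 :> int).

Local Open Scope classical_set_scope.

Definition connected_in (adj : rel Z2) (S : set Z2) (x y : Z2) : Prop :=
  exists p : seq Z2,
    [/\ path adj x p, last x p = y & forall z, z \in x :: p -> S z].

Definition component (adj : rel Z2) (S : set Z2) (C : set Z2) : Prop :=
  exists x, S x /\ C = [set y | connected_in adj S x y].

Definition rare (R : realType) (d : measure_display) (T : measurableType d)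
  (P : probability T R) (B : T -> set Z2) (eps : R) : Prop :=
  0 <= eps /\
  forall A : {fset Z2},
    (P [set w | forall a, a \in A -> B w a] <= (eps ^+ #|` A|)%:E)%E.

(* Main.v *)
Require Import Defs.
From HB Require Import structures.
From mathcomp Require Import all_boot all_order all_algebra.
From mathcomp Require Import all_classical all_reals all_analysis.
From mathcomp Require Import finmap.
From mathcomp Require Import zify lra.
Set Implicit Arguments. Unset Strict Implicit. Unset Printing Implicit Defensive.
Import Order.TTheory GRing.Theory Num.Theory.
Local Open Scope ring_scope.


Lemma adj_sq_sym : symmetric adj_sq.
Proof. move=> [a b] [c d]; rewrite /adj_sq /=; apply/idP/idP => H; lia. Qed.
Lemma adj_king_sym : symmetric adj_king.
Proof. move=> [a b] [c d]; rewrite /adj_king /=; apply/idP/idP => H; lia. Qed.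
Lemma sq_king u v : adj_sq u v -> adj_king u v.
Proof. case: u v => [a b] [c d]; rewrite /adj_sq /adj_king /= => H; lia. Qed.

Lemma last_rev_belast (T : Type) (x : T) p : last (last x p) (rev (belast x p)) = x.
Proof.
elim: p x => [|y p IH] x //=.
rewrite rev_cons -cats1 last_cat /=. done.
Qed.

Lemma mem_rev_belast (T : eqType) (x : T) p : (last x p :: rev (belast x p)) =i x :: p.
Proof.
move=> z; rewrite -(mem_rev (x :: p)).
have -> : x :: p = rcons (belast x p) (last x p) by rewrite -lastI.
by rewrite rev_rcons.
Qed.

Lemma rev_walk (e : rel Z2) (es : symmetric e) x p :
  path e x p -> path e (last x p) (rev (belast x p)).
Proof.
move=> H; rewrite rev_path; apply: sub_path H => a b; rewrite es. done.
Qed.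

Definition cross (x y : int) (a b : Z2) : bool :=
  ((a.1 == x) && (b.1 == x + 1) || (a.1 == x + 1) && (b.1 == x)) &&
  (y < Num.max a.2 b.2).

Fixpoint ncross (x y : int) (a : Z2) (p : seq Z2) : nat :=
  if p is b :: p' then cross x y a b + ncross x y b p' else 0%N.

Lemma cross_all x y a b : adj_king a b -> y < a.2 ->
  cross x y a b = (a.1 <= x) (+) (b.1 <= x).
Proof. case: a b => [a1 a2] [b1 b2]; rewrite /adj_king /cross /= => H1 H2; lia. Qed.

Lemma ncross_all x y a p : path adj_king a p -> (forall c : Z2, c \in a :: p -> y < c.2) ->
  odd (ncross x y a p) = (a.1 <= x) (+) ((last a p).1 <= x).
Proof.
elim: p a => [|b p IH] a /=; first by case: (a.1 <= x).
move=> /andP[Hab Hp] Hy.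
rewrite oddD IH //; last by move=> c Hc; apply: Hy; rewrite inE Hc orbT.
rewrite cross_all //; last by apply: Hy; rewrite inE eqxx.
by case: (a.1 <= x); case: (b.1 <= x); case: ((last b p).1 <= x).
Qed.

Lemma ncross_none x y a p : (forall c : Z2, c \in a :: p -> c.2 <= y) -> ncross x y a p = 0%N.
Proof.
elim: p a => [|b p IH] a //= H.
rewrite IH; last by move=> c Hc; apply: H; rewrite inE Hc orbT.
have Ha := H a (mem_head _ _).
have Hb : b.2 <= y by apply: H; rewrite !inE eqxx orbT.
rewrite /cross; case: a b Ha Hb {H} => [a1 a2] [b1 b2] /= Ha Hb.
have -> : (y < Num.max a2 b2) = false by lia.
by rewrite andbF.
Qed.

Lemma neq_pair (a1 a2 b1 b2 : int) : ((a1, a2) != (b1, b2)) = ~~ ((a1 == b1) && (a2 == b2)).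
Proof. by rewrite xpair_eqE. Qed.

Lemma cross_vert x y a b : adj_king a b -> a != (x, y) -> b != (x, y) ->
  a != (x, y + 1) -> b != (x, y + 1) -> cross x y a b = cross x (y + 1) a b.
Proof.
case: a b => [a1 a2] [b1 b2]; rewrite /adj_king /cross !neq_pair /= => *. lia.
Qed.

Lemma ncross_vert x y a p : path adj_king a p ->
  (x, y) \notin a :: p -> (x, y + 1) \notin a :: p ->
  ncross x y a p = ncross x (y + 1) a p.
Proof.
elim: p a => [|b p IH] a // /andP[Hab Hp].
rewrite 2!in_cons negb_or => /andP[H1 H2].
rewrite in_cons negb_or => /andP[H3 H4].
have H2' := H2; have H4' := H4.
move: H2' H4'; rewrite in_cons !negb_or => /andP[H5 _] /andP[H6 _].
rewrite [LHS]/= [RHS]/= (IH b Hp H2 H4) (@cross_vert x y a b Hab) //;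
  by rewrite eq_sym.
Qed.

Definition fcol x y (c : Z2) : bool := (c.1 == x + 1) && (y < c.2).

Lemma cross_horiz x y a b : adj_king a b -> a != (x + 1, y) -> b != (x + 1, y) ->
  cross x y a b (+) cross (x + 1) y a b = fcol x y a (+) fcol x y b.
Proof.
case: a b => [a1 a2] [b1 b2]; rewrite /adj_king /cross /fcol !neq_pair /= => H H1 H2.
have Hm : forall u v : int, (y < Num.max u v) = (y < u) || (y < v) by move=> u v; lia.
rewrite !Hm.
case: (boolP (a1 == x)) => ?; case: (boolP (a1 == x + 1)) => ?;
case: (boolP (a1 == x + 1 + 1)) => ?; case: (boolP (b1 == x)) => ?;
case: (boolP (b1 == x + 1)) => ?; case: (boolP (b1 == x + 1 + 1)) => ?;
case: (boolP (y < a2)) => ?; case: (boolP (y < b2)) => ? //=; lia.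
Qed.


Lemma ncross_horiz x y a p : path adj_king a p -> (x + 1, y) \notin a :: p ->
  odd (ncross x y a p) (+) odd (ncross (x + 1) y a p) = fcol x y a (+) fcol x y (last a p).
Proof.
elim: p a => [|b p IH] a; first by rewrite /=; case: (fcol x y a).
move=> /andP[Hab Hp]; rewrite in_cons negb_or => /andP[H1 H2].
rewrite /= !oddD.
have H2' : b != (x + 1, y).
  by move: H2; rewrite in_cons negb_or eq_sym => /andP[].
have := cross_horiz Hab _ H2'; rewrite eq_sym => /(_ H1).
have := IH b Hp H2; rewrite !oddb.
case: (cross x y a b); case: (cross (x+1) y a b); case: (odd (ncross x y b p));
 case: (odd (ncross (x + 1) y b p)); case: (fcol x y a); case: (fcol x y b);
 case: (fcol x y (last b p)) => //=.
Qed.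

Definition par (g : Z2) (gs : seq Z2) (c : Z2) : bool := odd (ncross c.1 c.2 g gs).

Lemma par_step x0 x1 g gs q r :
  path adj_king g gs -> g.1 < x0 -> x1 < (last g gs).1 ->
  adj_sq q r -> x0 <= q.1 <= x1 -> x0 <= r.1 <= x1 ->
  q \notin g :: gs -> r \notin g :: gs -> par g gs q = par g gs r.
Proof.
move=> Hg Hg0 Hg1; case: q r => [q1 q2] [r1 r2].
rewrite /adj_sq /par /= => Hqr Hq Hr Nq Nr.
have [E|E] : (q1 = r1) \/ (q2 = r2) by lia.
- subst r1. have [E2|E2] : r2 = q2 + 1 \/ q2 = r2 + 1 by lia.
  + by subst r2; rewrite (ncross_vert Hg).
  + by subst q2; rewrite (@ncross_vert q1 r2 g gs Hg).
- subst r2. have [E2|E2] : r1 = q1 + 1 \/ q1 = r1 + 1 by lia.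
  + subst r1. have := ncross_horiz (x:=q1) (y:=q2) Hg Nr.
    have -> : fcol q1 q2 g = false by rewrite /fcol; lia.
    have -> : fcol q1 q2 (last g gs) = false by rewrite /fcol; lia.
    by case: (odd (ncross q1 q2 g gs)); case: (odd (ncross (q1 + 1) q2 g gs)).
  + subst q1. have := ncross_horiz (x:=r1) (y:=q2) Hg Nq.
    have -> : fcol r1 q2 g = false by rewrite /fcol; lia.
    have -> : fcol r1 q2 (last g gs) = false by rewrite /fcol; lia.
    by case: (odd (ncross r1 q2 g gs)); case: (odd (ncross (r1 + 1) q2 g gs)).
Qed.

Lemma par_path x0 x1 g gs p ps :
  path adj_king g gs -> g.1 < x0 -> x1 < (last g gs).1 ->
  path adj_sq p ps -> (forall c : Z2, c \in p :: ps -> x0 <= c.1 <= x1) ->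
  (forall c : Z2, c \in p :: ps -> c \notin g :: gs) ->
  par g gs p = par g gs (last p ps).
Proof.
move=> Hg Hg0 Hg1; elim: ps p => [|r ps IH] p //= /andP[Hpr Hp] Hc Hn.
rewrite (par_step Hg Hg0 Hg1 Hpr) ?Hc ?Hn ?inE ?eqxx ?orbT //.
apply: IH => // c Hc'; [apply: Hc | apply: Hn]; by rewrite inE Hc' orbT.
Qed.

Lemma crossing0 x0 x1 y0 y1 g gs p ps :
  path adj_king g gs -> (forall c : Z2, c \in g :: gs -> y0 <= c.2 <= y1) ->
  g.1 < x0 -> x1 < (last g gs).1 ->
  path adj_sq p ps -> (forall c : Z2, c \in p :: ps -> x0 <= c.1 <= x1) ->
  p.2 < y0 -> y1 <= (last p ps).2 ->
  exists c : Z2, c \in g :: gs /\ c \in p :: ps.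
Proof.
move=> Hg Hgy Hg0 Hg1 Hp Hpx Hp0 Hp1.
case: (boolP (has (fun c => c \in g :: gs) (p :: ps))) => [/hasP[c H1 H2]|Hn].
  by exists c.
have Hn' : forall c : Z2, c \in p :: ps -> c \notin g :: gs.
  by move=> c Hc; apply/negP => Hc'; move/hasP: Hn; apply; exists c.
have := par_path Hg Hg0 Hg1 Hp Hpx Hn'.
rewrite /par ncross_all //; last first.
  by move=> c Hc; have := Hgy c Hc; lia.
rewrite ncross_none; last first.
  by move=> c Hc; have := Hgy c Hc; lia.
have Hx := Hpx p (mem_head _ _).
have -> : (g.1 <= p.1) = true by lia.
have -> : ((last g gs).1 <= p.1) = false by lia.
done.
Qed.

Lemma crossing1 x0 x1 y0 y1 g gs p ps :
  path adj_king g gs -> (forall c : Z2, c \in g :: gs -> y0 <= c.2 <= y1) ->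
  (g.1 < x0 /\ x1 < (last g gs).1 \/ x1 < g.1 /\ (last g gs).1 < x0) ->
  path adj_sq p ps -> (forall c : Z2, c \in p :: ps -> x0 <= c.1 <= x1) ->
  p.2 < y0 -> y1 <= (last p ps).2 ->
  exists c : Z2, c \in g :: gs /\ c \in p :: ps.
Proof.
move=> Hg Hgy [[H1 H2]|[H1 H2]]; first exact: crossing0.
move=> Hp Hpx Hp0 Hp1.
have Hg' := rev_walk adj_king_sym Hg.
have Hgy' : forall c : Z2, c \in last g gs :: rev (belast g gs) -> y0 <= c.2 <= y1.
  by move=> c Hc; apply: Hgy; rewrite -mem_rev_belast.
have H2' : x1 < (last (last g gs) (rev (belast g gs))).1 by rewrite last_rev_belast.
have [c [Hc1 Hc2]] := crossing0 Hg' Hgy' H2 H2' Hp Hpx Hp0 Hp1.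
by exists c; split => //; rewrite -mem_rev_belast.
Qed.

Lemma crossing2 x0 x1 y0 y1 g gs p ps :
  path adj_king g gs -> (forall c : Z2, c \in g :: gs -> y0 <= c.2 <= y1) ->
  (g.1 < x0 /\ x1 < (last g gs).1 \/ x1 < g.1 /\ (last g gs).1 < x0) ->
  path adj_sq p ps -> (forall c : Z2, c \in p :: ps -> x0 <= c.1 <= x1) ->
  (p.2 < y0 /\ y1 <= (last p ps).2 \/ y1 <= p.2 /\ (last p ps).2 < y0) ->
  exists c : Z2, c \in g :: gs /\ c \in p :: ps.
Proof.
move=> Hg Hgy Hgx Hp Hpx [[H1 H2]|[H1 H2]]; first exact: (crossing1 Hg Hgy Hgx Hp Hpx H1 H2).
have Hp' := rev_walk adj_sq_sym Hp.
have Hpx' : forall c : Z2, c \in last p ps :: rev (belast p ps) -> x0 <= c.1 <= x1.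
  by move=> c Hc; apply: Hpx; rewrite -mem_rev_belast.
have H1' : y1 <= (last (last p ps) (rev (belast p ps))).2 by rewrite last_rev_belast.
have [c [Hc1 Hc2]] := crossing1 Hg Hgy Hgx Hp' Hpx' H2 H1'.
by exists c; split => //; rewrite -mem_rev_belast.
Qed.

Definition sw (c : Z2) : Z2 := (c.2, c.1).
Lemma swK : involutive sw. Proof. by case. Qed.
Lemma sw_sq a b : adj_sq (sw a) (sw b) = adj_sq a b.
Proof. case: a b => [a1 a2] [b1 b2]; rewrite /adj_sq /sw /=; apply/idP/idP => H; lia. Qed.
Lemma sw_king a b : adj_king (sw a) (sw b) = adj_king a b.
Proof. case: a b => [a1 a2] [b1 b2]; rewrite /adj_king /sw /=; apply/idP/idP => H; lia. Qed.

Lemma map_walk (f : Z2 -> Z2) (e : rel Z2) x p :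
  (forall a b, e (f a) (f b) = e a b) -> path e (f x) (map f p) = path e x p.
Proof. move=> Hf; elim: p x => [|y p IH] x //=; by rewrite Hf IH. Qed.

Lemma mem_map_sw (c : Z2) s : (sw c \in map sw s) = (c \in s).
Proof. apply: mem_map; exact: can_inj swK. Qed.

Lemma last_map_sw x p : last (sw x) (map sw p) = sw (last x p).
Proof. by rewrite last_map. Qed.

Lemma crossingT x0 x1 y0 y1 g gs p ps :
  path adj_king g gs -> (forall c : Z2, c \in g :: gs -> x0 <= c.1 <= x1) ->
  (g.2 < y0 /\ y1 < (last g gs).2 \/ y1 < g.2 /\ (last g gs).2 < y0) ->
  path adj_sq p ps -> (forall c : Z2, c \in p :: ps -> y0 <= c.2 <= y1) ->
  (p.1 < x0 /\ x1 <= (last p ps).1 \/ x1 <= p.1 /\ (last p ps).1 < x0) ->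
  exists c : Z2, c \in g :: gs /\ c \in p :: ps.
Proof.
move=> Hg Hgx Hge Hp Hpy Hpe.
have Hg' : path adj_king (sw g) (map sw gs) by rewrite map_walk // => a b; apply: sw_king.
have Hp' : path adj_sq (sw p) (map sw ps) by rewrite map_walk // => a b; apply: sw_sq.
have Hgy' : forall c : Z2, c \in sw g :: map sw gs -> x0 <= c.2 <= x1.
  move=> c Hc; have : sw c \in g :: gs by rewrite -(mem_map_sw _ (g :: gs)) swK.
  by move/Hgx; case: c {Hc}.
have Hpx' : forall c : Z2, c \in sw p :: map sw ps -> y0 <= c.1 <= y1.
  move=> c Hc; have : sw c \in p :: ps by rewrite -(mem_map_sw _ (p :: ps)) swK.
  by move/Hpy; case: c {Hc}.
have Hge' : (sw g).1 < y0 /\ y1 < (last (sw g) (map sw gs)).1 \/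
            y1 < (sw g).1 /\ (last (sw g) (map sw gs)).1 < y0 by rewrite last_map_sw.
have Hpe' : (sw p).2 < x0 /\ x1 <= (last (sw p) (map sw ps)).2 \/
            x1 <= (sw p).2 /\ (last (sw p) (map sw ps)).2 < x0 by rewrite last_map_sw.
have [c [H1 H2]] := crossing2 Hg' Hgy' Hge' Hp' Hpx' Hpe'.
exists (sw c); rewrite -(mem_map_sw (sw c) (g :: gs)) -(mem_map_sw (sw c) (p :: ps)) swK.
by split.
Qed.

Lemma first_hit (e : rel Z2) (Q : pred Z2) a p : Q (last a p) ->
  exists q, [/\ path e a p -> path e a q, Q (last a q),
     {subset a :: q <= a :: p} & forall c, c \in belast a q -> ~~ Q c].
Proof.
elim: p a => [|b p IH] a /= HQ.
  by exists [::]; split => //.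
case: (boolP (Q a)) => Ha.
  by exists [::]; split => // c; rewrite inE => /eqP ->; rewrite mem_head.
have [q [Hp HQq Hs Hb]] := IH b HQ.
exists (b :: q); split => //=.
- by move=> /andP[-> /Hp].
- move=> c; rewrite inE => /orP[/eqP ->|]; first by rewrite mem_head.
  by move/Hs => Hc; rewrite inE Hc orbT.
- by move=> c; rewrite inE => /orP[/eqP ->|/Hb].
Qed.

Lemma last_exit (e : rel Z2) (Q : pred Z2) a p : Q a ->
  exists a' q, [/\ path e a p -> path e a' q, last a' q = last a p, Q a',
     {subset a' :: q <= a :: p} & forall c, c \in q -> ~~ Q c].
Proof.
elim/last_ind: p => [|p b IH] Ha.
  by exists a, [::]; split.
have [a' [q [Hp Hl HQ Hs Hn]]] := IH Ha.
case: (boolP (Q b)) => Hb.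
  exists b, [::]; split => //; first by rewrite last_rcons.
  by move=> c; rewrite inE => /eqP ->; rewrite -rcons_cons mem_rcons mem_head.
exists a', (rcons q b); split => //.
- rewrite !rcons_path => /andP[/Hp -> /=]; by rewrite Hl.
- by rewrite !last_rcons.
- move=> c; rewrite -rcons_cons mem_rcons inE => /orP[/eqP ->|/Hs].
    by rewrite -rcons_cons mem_rcons mem_head.
  by rewrite -rcons_cons mem_rcons inE => ->; rewrite orbT.
- by move=> c; rewrite mem_rcons inE => /orP[/eqP ->|/Hn].
Qed.

Lemma trim (e : rel Z2) (h : Z2 -> int) (lo hi : int) a p :
  (forall u v, e u v -> `|h u - h v| <= 1) -> lo <= hi ->
  path e a p -> h a < lo -> hi < h (last a p) ->
  exists a' q, [/\ path e a' q, h a' = lo, h (last a' q) = hi,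
     {subset a' :: q <= a :: p} & forall c, c \in a' :: q -> lo <= h c <= hi].
Proof.
move=> He Hlh Hp Ha Hl.
have [q [Hq1 Hq2 Hq3 Hq4]] := first_hit e (Q := fun c => hi <= h c) (p := p) (a := a) (ltW Hl).
have Hq := Hq1 Hp.
have Hlast : h (last a q) = hi.
  clear Hq1; case/lastP: q Hq Hq2 Hq3 Hq4 => [|q' c] Hq Hq2 Hq3 Hq4.
    by move: Hq2 => /=; lia.
  rewrite last_rcons in Hq2 *.
  move: Hq; rewrite rcons_path => /andP[_ /He].
  have : ~~ (hi <= h (last a q')).
    by apply: Hq4; rewrite belast_rcons mem_last.
  move: Hq2; lia.
have [a' [q2 [Hp2 Hl2 HQ Hs Hn]]] := last_exit e (Q := fun c => h c <= lo) (a := a) q (ltW Ha).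
have Ha' : h a' = lo.
  move: Hp2 Hl2 Hn Hs HQ; case: q2 => [|d q2] Hp2 Hl2 Hn Hs /= HQ.
  - move: HQ; rewrite /= in Hl2; rewrite Hl2 Hlast; lia.
  - move: (Hp2 Hq) => /= /andP[/He Hd _]; have := Hn d (mem_head _ _); move: HQ; lia.
exists a', q2; split => //.
- exact: Hp2.
- by rewrite Hl2.
- move=> c /Hs Hc; apply: Hq3.
  exact: Hc.
- move=> c Hc.
  have Hup : h c <= hi.
    have := Hs c Hc.
    have -> : a :: q = rcons (belast a q) (last a q) by rewrite lastI.
    rewrite mem_rcons inE => /orP[/eqP ->|Hb]; first by rewrite Hlast.
    by have := Hq4 c Hb; lia.
  move: Hc; rewrite inE => /orP[/eqP Ec|Hc].
  + by rewrite Ec Ha'; lia.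
  + by have := Hn c Hc; move: Hup; lia.
Qed.

Definition conn (e : rel Z2) (S : Z2 -> Prop) (a b : Z2) : Prop :=
  exists p, [/\ path e a p, last a p = b & forall c : Z2, c \in a :: p -> S c].

Lemma conn_refl (e : rel Z2) (S : Z2 -> Prop) a : S a -> conn e S a a.
Proof. by move=> Ha; exists [::]; split => // c; rewrite inE => /eqP ->. Qed.

Lemma conn_trans (e : rel Z2) (S : Z2 -> Prop) a b c : conn e S a b -> conn e S b c -> conn e S a c.
Proof.
move=> [p [Hp Hl Hs]] [q [Hq Hl2 Hs2]]; exists (p ++ q); split.
- by rewrite cat_path Hp Hl Hq.
- by rewrite last_cat Hl.
- move=> d; rewrite -cat_cons mem_cat => /orP[/Hs //|Hd].
  apply: Hs2; rewrite inE Hd orbT //.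
Qed.

Lemma conn_step (e : rel Z2) (S : Z2 -> Prop) a b : S a -> S b -> e a b -> conn e S a b.
Proof.
by move=> Ha Hb Hab; exists [:: b]; split => /=; [rewrite Hab|done|
  move=> c; rewrite !inE => /orP[/eqP->|/eqP->]].
Qed.

Lemma conn_mono (e e' : rel Z2) (S S' : Z2 -> Prop) a b :
  (forall u v, e u v -> e' u v) -> (forall c, S c -> S' c) -> conn e S a b -> conn e' S' a b.
Proof.
move=> He HS [p [Hp Hl Hs]]; exists p; split => //.
- exact: sub_path Hp.
- by move=> c /Hs /HS.
Qed.

Lemma conn_sym (e : rel Z2) (S : Z2 -> Prop) a b : symmetric e -> conn e S a b -> conn e S b a.
Proof.
move=> es [p [Hp <- Hs]]; exists (rev (belast a p)); split.
- by apply: rev_walk.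
- by rewrite last_rev_belast.
- by move=> c Hc; apply: Hs; rewrite -mem_rev_belast.
Qed.

Definition fw (l r : Z2) : Z2 := (r.2 - l.2, l.1 - r.1).
Definition addc (u v : Z2) : Z2 := (u.1 + v.1, u.2 + v.2).
Definition subc (u v : Z2) : Z2 := (u.1 - v.1, u.2 - v.2).

Lemma E1 l r : subc l (fw l (addc l (fw l r))) = r.
Proof. case: l r => [a b] [c d]; rewrite /subc /fw /addc /=; congr pair; lia. Qed.
Lemma E2 l r : subc (addc r (fw l r)) (fw (addc r (fw l r)) r) = addc l (fw l r).
Proof. case: l r => [a b] [c d]; rewrite /subc /fw /addc /=; congr pair; lia. Qed.
Lemma E3 l r : subc r (fw (addc r (fw l r)) r) = l.
Proof. case: l r => [a b] [c d]; rewrite /subc /fw /addc /=; congr pair; lia. Qed.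
Lemma E4 l r : fw (addc l (fw l r)) (addc r (fw l r)) = fw l r.
Proof. case: l r => [a b] [c d]; rewrite /subc /fw /addc /=; congr pair; lia. Qed.
Lemma E5 u v : subc (addc u v) v = u.
Proof. case: u v => [a b] [c d]; rewrite /subc /fw /addc /=; congr pair; lia. Qed.

Lemma adj_la l r : adj_sq l r -> adj_sq l (addc l (fw l r)).
Proof. case: l r => [a b] [c d]; rewrite /adj_sq /fw /addc /=; lia. Qed.
Lemma adj_la_ra l r : adj_sq l r -> adj_sq (addc l (fw l r)) (addc r (fw l r)).
Proof. case: l r => [a b] [c d]; rewrite /adj_sq /fw /addc /=; lia. Qed.
Lemma king_r_la l r : adj_sq l r -> adj_king r (addc l (fw l r)).
Proof. case: l r => [a b] [c d]; rewrite /adj_sq /adj_king /fw /addc /=; lia. Qed.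
Lemma sq_r_ra l r : adj_sq l r -> adj_sq r (addc r (fw l r)).
Proof. case: l r => [a b] [c d]; rewrite /adj_sq /fw /addc /=; lia. Qed.

Section Hex.
Variables (col : Z2 -> bool).

Definition step (s : Z2 * Z2) : Z2 * Z2 :=
  let l := s.1 in let r := s.2 in let f := fw l r in
  let la := addc l f in let ra := addc r f in
  if col la then (l, la) else if ~~ col ra then (ra, r) else (la, ra).

Definition hpred (s : Z2 * Z2) : Z2 * Z2 :=
  let l := s.1 in let r := s.2 in let f := fw l r in
  let A := subc l f in let C := subc r f in
  if col A then (l, A) else if ~~ col C then (C, r) else (A, C).

Lemma pred_step s : ~~ col s.1 -> col s.2 -> hpred (step s) = s.
Proof.
case: s => l r /= Hl Hr; rewrite /step /=.
case: ifP => Hla.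
  by rewrite /hpred /= E1 Hr.
case: ifP => Hra.
  by rewrite /hpred /= E2 E3 Hla Hl.
by rewrite /hpred /= E4 !E5 (negbTE Hl) Hr.
Qed.

Definition valid (s : Z2 * Z2) := [&& ~~ col s.1, col s.2 & adj_sq s.1 s.2].

Lemma step_inj s t : valid s -> valid t -> step s = step t -> s = t.
Proof.
move=> /and3P[Hs1 Hs2 _] /and3P[Ht1 Ht2 _] E.
by rewrite -(pred_step Hs1 Hs2) E pred_step.
Qed.

Lemma step_valid s : valid s -> valid (step s).
Proof.
case: s => [[a b] [c d]] /and3P[/= H1 H2 H3]; rewrite /step /valid /fw /addc /=.
case: ifP => Hla /=.
  by rewrite H1 Hla /=; move: H3; rewrite /adj_sq /=; lia.
case: ifP => Hra /=.
  by rewrite Hra H2 /=; move: H3; rewrite /adj_sq /=; lia.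
by rewrite Hla /= (negbFE Hra) /=; move: H3; rewrite /adj_sq /=; lia.
Qed.

Lemma step_white s (W : Z2 -> Prop) : valid s ->
  (forall c, ~~ col c -> c \in [:: s.1; addc s.1 (fw s.1 s.2); addc s.2 (fw s.1 s.2)] -> W c) ->
  conn adj_sq W s.1 (step s).1.
Proof.
case: s => l r /and3P[/= H1 H2 H3] HW /=.
have Wl : W l by apply: HW; rewrite ?inE ?eqxx.
rewrite /step /=.
case: ifP => Hla /=; first exact: conn_refl.
have Wla : W (addc l (fw l r)) by apply: HW; rewrite ?Hla ?inE ?eqxx ?orbT.
have Hsq1 := adj_la H3.
case: ifP => Hra /=.
  apply: conn_trans (conn_step Wl Wla Hsq1) (conn_step Wla _ _).
    by apply: HW; rewrite ?Hra ?inE ?eqxx ?orbT.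
  exact: adj_la_ra.
exact: conn_step Wl Wla Hsq1.
Qed.

Lemma step_black s (K : Z2 -> Prop) : valid s ->
  (forall c, col c -> c \in [:: s.2; addc s.1 (fw s.1 s.2); addc s.2 (fw s.1 s.2)] -> K c) ->
  conn adj_king K s.2 (step s).2.
Proof.
case: s => l r /and3P[/= H1 H2 H3] HK /=.
have Kr : K r by apply: HK; rewrite ?inE ?eqxx.
rewrite /step /=.
case: ifP => Hla /=.
  apply: conn_step Kr _ _; first by apply: HK; rewrite ?inE ?eqxx ?orbT.
  exact: king_r_la.
case: ifP => Hra /=; first exact: conn_refl.
apply: conn_step Kr _ _; first by apply: HK; rewrite ?(negbFE Hra) ?inE ?eqxx ?orbT.
exact: sq_king (sq_r_ra H3).
Qed.

End Hex.

Definition rng (a b : int) : seq int := [seq a + (i%:Z) | i <- iota 0 (absz (b - a + 1))].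

Lemma mem_rng a b z : a <= z <= b -> z \in rng a b.
Proof.
move=> H; apply/mapP; exists (absz (z - a)); first by rewrite mem_iota; lia.
lia.
Qed.

Lemma sq_lip2 u v : adj_sq u v -> `|u.2 - v.2| <= 1.
Proof. case: u v => [? ?] [? ?]; rewrite /adj_sq /=; lia. Qed.
Lemma king_lip1 u v : adj_king u v -> `|u.1 - v.1| <= 1.
Proof. case: u v => [? ?] [? ?]; rewrite /adj_king /=; lia. Qed.
Lemma king_lip2 u v : adj_king u v -> `|u.2 - v.2| <= 1.
Proof. case: u v => [? ?] [? ?]; rewrite /adj_king /=; lia. Qed.

Section Rect.
Variables (x0 x1 y0 y1 : int) (blk : Z2 -> bool).
Hypotheses (hx : x0 <= x1) (hy : y0 <= y1).

Definition colR (z : Z2) : bool :=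
  if (x0 <= z.1 <= x1) then (y0 <= z.2 <= y1) && blk z else true.
Definition inX (z : Z2) : bool := (x0 - 1 <= z.1 <= x1 + 1) && (y0 - 1 <= z.2 <= y1 + 1).
Definition term (s : Z2 * Z2) : bool := (y1 < s.1.2) || (x1 < s.2.1).

Lemma white_cols z : ~~ colR z -> x0 <= z.1 <= x1.
Proof. rewrite /colR; case: ifP => //. Qed.
Lemma white_rows z : ~~ colR z -> y0 <= z.2 <= y1 -> ~~ blk z.
Proof. by rewrite /colR; case: ifP => // _ /negP H1 H2; apply/negP => H3; apply: H1; rewrite H2 H3. Qed.
Lemma black_facts z : colR z -> (z.1 < x0) || (x1 < z.1) || (y0 <= z.2 <= y1).
Proof. rewrite /colR; case: ifP => [_ /andP[-> _]|]; [by rewrite orbT | lia]. Qed.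
Lemma black_real z : colR z -> x0 <= z.1 <= x1 -> (y0 <= z.2 <= y1) && blk z.
Proof. by rewrite /colR => + H; rewrite H. Qed.

Lemma stay s : valid colR s -> inX s.1 -> inX s.2 -> ~~ term s ->
  inX (addc s.1 (fw s.1 s.2)) && inX (addc s.2 (fw s.1 s.2)).
Proof.
case: s => l r /and3P[/= H1 H2 H3] Hl Hr Ht.
have Wl := white_cols H1; have Br := black_facts H2.
move: H3 Hl Hr Ht Wl Br; case: l r {H1 H2} => [a b] [c d].
rewrite /adj_sq /inX /term /fw /addc /= => *. lia.
Qed.

Lemma step_inX s : valid colR s -> inX s.1 -> inX s.2 -> ~~ term s ->
  inX (step colR s).1 && inX (step colR s).2.
Proof.
move=> Hv Hl Hr Ht; have /andP[Ha Hb] := stay Hv Hl Hr Ht.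
rewrite /step; case: ifP => _ /=; first by rewrite Hl Ha.
by case: ifP => _ /=; rewrite ?Hb ?Hr ?Ha.
Qed.

Definition s0 : Z2 * Z2 := ((x0, y0 - 1), (x0 - 1, y0 - 1)).
Definition t0 : Z2 * Z2 := ((x0, y0 - 2), (x0 - 1, y0 - 2)).

Lemma s0_valid : valid colR s0.
Proof.
rewrite /valid /s0 /colR /adj_sq /=.
have -> : (x0 <= x0 <= x1) = true by lia.
have -> : (x0 <= x0 - 1 <= x1) = false by lia.
have -> : (y0 <= y0 - 1 <= y1) = false by lia.
simpl; lia.
Qed.

Lemma t0_valid : valid colR t0.
Proof.
rewrite /valid /t0 /colR /adj_sq /=.
have -> : (x0 <= x0 <= x1) = true by lia.
have -> : (x0 <= x0 - 1 <= x1) = false by lia.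
have -> : (y0 <= y0 - 2 <= y1) = false by lia.
simpl; lia.
Qed.

Lemma step_t0 : step colR t0 = s0.
Proof.
rewrite /step /t0 /s0 /fw /addc /colR /=.
have -> : (x0 <= x0 + (y0 - 2 - (y0 - 2)) <= x1) = true by lia.
have -> : (y0 <= y0 - 2 + (x0 - (x0 - 1)) <= y1) = false by lia.
have -> : (x0 <= x0 - 1 + (y0 - 2 - (y0 - 2)) <= x1) = false by lia.
simpl; congr pair; congr pair; lia.
Qed.

Definition traj k := iter k (step colR) s0.

Lemma traj_inv k : (forall j, (j < k)%N -> ~~ term (traj j)) ->
  [&& valid colR (traj k), inX (traj k).1 & inX (traj k).2].
Proof.
elim: k => [|k IH] Hnt.
  rewrite /traj /= s0_valid /inX /s0 /=; lia.
have /and3P[Hv Hl Hr] : [&& valid colR (traj k), inX (traj k).1 & inX (traj k).2].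
  by apply: IH => j Hj; apply: Hnt; apply: ltn_trans Hj _.
have Ht : ~~ term (traj k) by apply: Hnt.
rewrite /traj iterS -/(traj k) step_valid //=.
exact: step_inX.
Qed.

Definition cellsX := [seq (i, j) | i <- rng (x0 - 1) (x1 + 1), j <- rng (y0 - 1) (y1 + 1)].
Lemma inX_cells z : inX z -> z \in cellsX.
Proof.
case: z => i j /andP[Hi Hj]; apply: (allpairs_f (fun i j => (i, j)));
 exact: mem_rng.
Qed.
Definition statesX := [seq (u, v) | u <- cellsX, v <- cellsX].

Lemma trajS k : traj k.+1 = step colR (traj k).
Proof. by []. Qed.

Lemma traj_back i j : (i <= j)%N -> (forall k, (k <= j)%N -> valid colR (traj k)) ->
  traj i = traj j -> traj 0 = traj (j - i).
Proof.
elim: i j => [|i IH] j Hij Hv E; first by rewrite subn0.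
case: j Hij Hv E => [//|j] Hij Hv E.
rewrite !trajS in E.
have E' := step_inj (Hv i (ltnW (leq_trans Hij (leqnn _)))) (Hv j (leqnSn _)) E.
rewrite subSS; apply: IH => // k Hk; apply: Hv; exact: leq_trans Hk (leqnSn _).
Qed.

Lemma exists_term : exists k, term (traj k) /\ forall j, (j < k)%N -> ~~ term (traj j).
Proof.
set K := size statesX.
case: (boolP (has (fun k => term (traj k)) (iota 0 K.+1))) => [Hh|Hn].
  have ex : exists k, term (traj k) by case/hasP: Hh => k _ Hk; exists k.
  case: (ex_minnP ex) => m Hm Hmin; exists m; split => // j Hj.
  by apply/negP => Hjt; have := Hmin j Hjt; rewrite leqNgt Hj.
exfalso.
have Hnt : forall j, (j <= K)%N -> ~~ term (traj j).
  move=> j Hj; apply/negP => Ht; move/hasPn: Hn => /(_ j); rewrite mem_iota /= Ht.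
  by rewrite add0n ltnS Hj => /(_ isT).
have Hall : forall j, (j <= K)%N ->
    [&& valid colR (traj j), inX (traj j).1 & inX (traj j).2].
  move=> j Hj; apply: traj_inv => j' Hj'; apply: Hnt.
  exact: ltnW (leq_trans Hj' Hj).
set L := [seq traj j | j <- iota 0 K.+1].
have HsubL : {subset L <= statesX}.
  move=> s /mapP[j Hj ->]; move: Hj; rewrite mem_iota add0n ltnS /= => Hj.
  have /and3P[_ H1 H2] := Hall j Hj.
  case E: (traj j) => [u v]; rewrite E /= in H1 H2.
  apply: (allpairs_f (fun u v => (u, v))); exact: inX_cells.
case: (boolP (uniq L)) => HU.
  have := uniq_leq_size HU HsubL; rewrite size_map size_iota -/K.
  by rewrite ltnn.
have [i [j [Hij Hj HE]]] := uniqPn s0 HU.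
rewrite size_map size_iota in Hj.
have Hi : (i < K.+1)%N by exact: ltn_trans Hij Hj.
move: HE; rewrite (nth_map 0%N); last by rewrite size_iota.
rewrite (nth_map 0%N); last by rewrite size_iota.
rewrite !nth_iota // !add0n => HE.
have Hvj : forall k, (k <= j)%N -> valid colR (traj k).
  move=> k Hk; by case/and3P: (Hall k (leq_trans Hk Hj)).
have E0 := traj_back (ltnW Hij) Hvj HE.
case Ejm: (j - i)%N E0 => [|m] E0; first by move: Ejm; lia.
have Hmj : (m <= j)%N by lia.
rewrite trajS in E0.
have Hvm : valid colR (traj m) by apply: Hvj.
have Em : traj m = t0.
  apply: step_inj Hvm t0_valid _; by rewrite step_t0 -E0.
have /and3P[_ Hin _] := Hall m (leq_trans Hmj Hj).
rewrite Em /inX /t0 /= in Hin; lia.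
Qed.

Lemma conn_white k : (forall j, (j < k)%N -> ~~ term (traj j)) ->
  conn adj_sq (fun c => ~~ colR c /\ inX c) (traj 0).1 (traj k).1.
Proof.
elim: k => [|k IH] Hnt.
  apply: conn_refl; have /and3P[/and3P[? _ _] ? _] := traj_inv Hnt.
  by split.
have Hnt' : forall j, (j < k)%N -> ~~ term (traj j) by move=> j Hj; apply: Hnt; exact: ltn_trans Hj _.
apply: conn_trans (IH Hnt') _.
have /and3P[Hv Hl Hr] := traj_inv Hnt'.
have /andP[Ha Hb] := stay Hv Hl Hr (Hnt k (ltnSn k)).
rewrite trajS; apply: (@step_white colR (traj k) (fun c => ~~ colR c /\ inX c) Hv) => c Hw Hc; split => //.
by move: Hc; rewrite !inE => /orP[/eqP->|/orP[/eqP->|/eqP->]].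
Qed.

Lemma conn_black k : (forall j, (j < k)%N -> ~~ term (traj j)) ->
  conn adj_king (fun c => colR c /\ inX c) (traj 0).2 (traj k).2.
Proof.
elim: k => [|k IH] Hnt.
  apply: conn_refl; have /and3P[/and3P[_ ? _] _ ?] := traj_inv Hnt.
  by split.
have Hnt' : forall j, (j < k)%N -> ~~ term (traj j) by move=> j Hj; apply: Hnt; exact: ltn_trans Hj _.
apply: conn_trans (IH Hnt') _.
have /and3P[Hv Hl Hr] := traj_inv Hnt'.
have /andP[Ha Hb] := stay Hv Hl Hr (Hnt k (ltnSn k)).
rewrite trajS; apply: (@step_black colR (traj k) (fun c => colR c /\ inX c) Hv) => c Hw Hc; split => //.
by move: Hc; rewrite !inE => /orP[/eqP->|/orP[/eqP->|/eqP->]].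
Qed.

Lemma hex :
  (exists a p, [/\ path adj_sq a p, a.2 = y0, (last a p).2 = y1 &
     forall c : Z2, c \in a :: p -> [/\ x0 <= c.1 <= x1, y0 <= c.2 <= y1 & ~~ blk c]])
  \/ (exists a p, [/\ path adj_king a p, a.1 = x0, (last a p).1 = x1 &
     forall c : Z2, c \in a :: p -> [/\ x0 <= c.1 <= x1, y0 <= c.2 <= y1 & blk c]]).
Proof.
have [k [Hk Hnt]] := exists_term.
have /and3P[Hv Hl Hr] := traj_inv Hnt.
case/orP: Hk => Hk.
- left.
  have [p [Hp Hlast Hs]] := conn_white Hnt.
  have Hs0 : (traj 0).1 = (x0, y0 - 1) by [].
  have H1 : (traj 0).1.2 < y0 by rewrite Hs0 /=; lia.
  have H2 : y1 < (last (traj 0).1 p).2 by rewrite Hlast.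
  have [a' [q [Hq Ha Hl' Hsub Hrow]]] :=
    trim (h := fun c : Z2 => c.2) (lo := y0) (hi := y1) (@sq_lip2) hy Hp H1 H2.
  exists a', q; split => // c Hc.
  have [Hw HX] := Hs c (Hsub c Hc).
  have Hrc := Hrow c Hc.
  by split => //; [exact: white_cols | exact: white_rows].
- right.
  have [p [Hp Hlast Hs]] := conn_black Hnt.
  have Hs0 : (traj 0).2 = (x0 - 1, y0 - 1) by [].
  have H1 : (traj 0).2.1 < x0 by rewrite Hs0 /=; lia.
  have H2 : x1 < (last (traj 0).2 p).1 by rewrite Hlast.
  have [a' [q [Hq Ha Hl' Hsub Hcol]]] :=
    trim (h := fun c : Z2 => c.1) (lo := x0) (hi := x1) (@king_lip1) hx Hp H1 H2.
  exists a', q; split => // c Hc.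
  have [Hb HX] := Hs c (Hsub c Hc).
  have Hcc := Hcol c Hc.
  by have /andP[] := black_real Hb Hcc.
Qed.

End Rect.

Lemma hexT (x0 x1 y0 y1 : int) (blk : Z2 -> bool) : x0 <= x1 -> y0 <= y1 ->
  (exists a p, [/\ path adj_sq a p, a.1 = x0, (last a p).1 = x1 &
     forall c : Z2, c \in a :: p -> [/\ x0 <= c.1 <= x1, y0 <= c.2 <= y1 & ~~ blk c]])
  \/ (exists a p, [/\ path adj_king a p, a.2 = y0, (last a p).2 = y1 &
     forall c : Z2, c \in a :: p -> [/\ x0 <= c.1 <= x1, y0 <= c.2 <= y1 & blk c]]).
Proof.
move=> hx hy.
have swc : forall (c : Z2) s, (c \in map sw s) = (sw c \in s).
  by move=> c s; rewrite -(mem_map_sw (sw c) s) swK.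
case: (hex (fun z => blk (sw z)) hy hx) => [[a [p [Hp Ha Hl Hc]]]|[a [p [Hp Ha Hl Hc]]]].
- left; exists (sw a), (map sw p); split.
  + by rewrite map_walk // => u v; apply: sw_sq.
  + by rewrite /sw /= Ha.
  + by rewrite last_map_sw /sw /= Hl.
  + move=> c Hc'; have : sw c \in a :: p by rewrite -(mem_map_sw (sw c) (a :: p)) swK.
    by move/Hc; case: c {Hc'} => [c1 c2]; rewrite /sw /= => [[? ? ?]]; split.
- right; exists (sw a), (map sw p); split.
  + by rewrite map_walk // => u v; apply: sw_king.
  + by rewrite /sw /= Ha.
  + by rewrite last_map_sw /sw /= Hl.
  + move=> c Hc'; have : sw c \in a :: p by rewrite -(mem_map_sw (sw c) (a :: p)) swK.
    by move/Hc; case: c {Hc'} => [c1 c2]; rewrite /sw /= => [[? ? ?]]; split.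
Qed.

Lemma king_dist1 a p : path adj_king a p -> `|(last a p).1 - a.1| <= (size p)%:Z.
Proof.
elim: p a => [|b p IH] a /=; first by lia.
move=> /andP[/king_lip1 H1 /IH H2]; lia.
Qed.

Lemma king_dist2 a p : path adj_king a p -> `|(last a p).2 - a.2| <= (size p)%:Z.
Proof.
elim: p a => [|b p IH] a /=; first by lia.
move=> /andP[/king_lip2 H1 /IH H2]; lia.
Qed.

Lemma conn_mem (e : rel Z2) (S : Z2 -> Prop) a p c : path e a p ->
  (forall d : Z2, d \in a :: p -> S d) -> c \in a :: p -> conn e S a c.
Proof.
elim: p a => [|b p IH] a Hp HS.
  by rewrite inE => /eqP ->; apply: conn_refl; apply: HS; rewrite mem_head.
rewrite inE => /orP[/eqP ->|Hc]; first by apply: conn_refl; apply: HS; rewrite mem_head.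
move: Hp => /= /andP[Hab Hp].
apply: conn_trans (conn_step _ _ Hab) (IH b Hp _ Hc).
- by apply: HS; rewrite mem_head.
- by apply: HS; rewrite !inE eqxx orbT.
- by move=> d Hd; apply: HS; rewrite inE Hd orbT.
Qed.

Lemma conn_in_path (e : rel Z2) (S : Z2 -> Prop) a p c d : symmetric e -> path e a p ->
  (forall d : Z2, d \in a :: p -> S d) -> c \in a :: p -> d \in a :: p -> conn e S c d.
Proof.
move=> es Hp HS Hc Hd.
exact: conn_trans (conn_sym es (conn_mem Hp HS Hc)) (conn_mem Hp HS Hd).
Qed.

Lemma last_prev (e : rel Z2) x q : path e x q -> q != [::] ->
  exists d, d \in belast x q /\ e d (last x q).
Proof.
case/lastP: q => [//|q' l] Hp _; exists (last x q').
rewrite belast_rcons mem_last last_rcons; split => //.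
by move: Hp; rewrite rcons_path => /andP[_ ->].
Qed.

Section Det.
Variable blk : Z2 -> bool.
Definition W (c : Z2) : Prop := ~~ blk c.
Variable M : int.
Hypothesis hM : 2 <= M.
Hypothesis noLong : forall N : int, M <= N -> forall a p, path adj_king a p -> uniq (a :: p) ->
  (forall c : Z2, c \in a :: p -> blk c) -> `|a.1| <= 5 * N -> `|a.2| <= 5 * N ->
  (size p)%:Z + 1 < 2 * N.

Definition isV (N a0 a1 : int) (a : Z2) p :=
  [/\ path adj_sq a p, a.2 = - (5 * N), (last a p).2 = 5 * N &
     forall c : Z2, c \in a :: p -> [/\ a0 <= c.1 <= a1, - (5 * N) <= c.2 <= 5 * N & ~~ blk c]].
Definition isH (N b0 b1 : int) (a : Z2) p :=
  [/\ path adj_sq a p, a.1 = - (5 * N), (last a p).1 = 5 * N &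
     forall c : Z2, c \in a :: p -> [/\ - (5 * N) <= c.1 <= 5 * N, b0 <= c.2 <= b1 & ~~ blk c]].

Lemma existsV N a0 a1 : M <= N -> a0 <= a1 -> 2 * N - 1 <= a1 - a0 ->
  - (5 * N) <= a0 -> a1 <= 5 * N -> exists a p, isV N a0 a1 a p.
Proof.
move=> HN h01 hlen hlo hhi.
have hy : - (5 * N) <= 5 * N by lia.
case: (hex blk h01 hy) => [[a [p [Hp Ha Hl Hc]]]|[a [p [Hp Ha Hl Hc]]]].
  by exists a, p; split.
exfalso.
move: Hl; case/shortenP: Hp Hc => p' Hp' Hu Hsub Hc Hl.
have Hc' : forall c : Z2, c \in a :: p' -> blk c.
  move=> c; rewrite inE => /orP[/eqP ->|/Hsub Hc2].
    by case: (Hc a (mem_head _ _)).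
  by case: (Hc c); rewrite // inE Hc2 orbT.
have [Ha1 Ha2 _] := Hc a (mem_head _ _).
have := noLong HN Hp' Hu Hc'; have := king_dist1 Hp'; rewrite Hl Ha.
move: Ha1 Ha2; lia.
Qed.

Lemma existsH N b0 b1 : M <= N -> b0 <= b1 -> 2 * N - 1 <= b1 - b0 ->
  - (5 * N) <= b0 -> b1 <= 5 * N -> exists a p, isH N b0 b1 a p.
Proof.
move=> HN h01 hlen hlo hhi.
have hx : - (5 * N) <= 5 * N by lia.
case: (hexT blk hx h01) => [[a [p [Hp Ha Hl Hc]]]|[a [p [Hp Ha Hl Hc]]]].
  by exists a, p; split.
exfalso.
move: Hl; case/shortenP: Hp Hc => p' Hp' Hu Hsub Hc Hl.
have Hc' : forall c : Z2, c \in a :: p' -> blk c.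
  move=> c; rewrite inE => /orP[/eqP ->|/Hsub Hc2].
    by case: (Hc a (mem_head _ _)).
  by case: (Hc c); rewrite // inE Hc2 orbT.
have [Ha1 Ha2 _] := Hc a (mem_head _ _).
have := noLong HN Hp' Hu Hc'; have := king_dist2 Hp'; rewrite Hl Ha.
move: Ha1 Ha2; lia.
Qed.

Lemma meetVH N a0 a1 N' b0 b1 v vs h hs : isV N a0 a1 v vs -> isH N' b0 b1 h hs ->
  - (5 * N') < a0 -> a1 < 5 * N' -> - (5 * N) < b0 -> b1 <= 5 * N ->
  exists c : Z2, c \in v :: vs /\ c \in h :: hs.
Proof.
move=> [Hv Hv1 Hv2 Hvc] [Hh Hh1 Hh2 Hhc] H1 H2 H3 H4.
have Hhk : path adj_king h hs by apply: sub_path Hh => u w; apply: sq_king.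
have Hhr : forall c : Z2, c \in h :: hs -> b0 <= c.2 <= b1.
  by move=> c Hc; case: (Hhc c Hc).
have Hvc' : forall c : Z2, c \in v :: vs -> a0 <= c.1 <= a1.
  by move=> c Hc; case: (Hvc c Hc).
have He1 : h.1 < a0 /\ a1 < (last h hs).1 \/ a1 < h.1 /\ (last h hs).1 < a0.
  by left; rewrite Hh1 Hh2.
have He2 : v.2 < b0 /\ b1 <= (last v vs).2 \/ b1 <= v.2 /\ (last v vs).2 < b0.
  by left; rewrite Hv1 Hv2.
have [c [Hc1 Hc2]] := crossing2 Hhk Hhr He1 Hv Hvc' He2.
by exists c.
Qed.


Lemma isV_W N a0 a1 a p : isV N a0 a1 a p -> forall c : Z2, c \in a :: p -> W c.
Proof. by move=> [_ _ _ H] c /H []. Qed.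
Lemma isH_W N b0 b1 a p : isH N b0 b1 a p -> forall c : Z2, c \in a :: p -> W c.
Proof. by move=> [_ _ _ H] c /H []. Qed.

Lemma share z a p b q : path adj_sq b q -> (forall c : Z2, c \in b :: q -> W c) ->
  (exists c : Z2, c \in a :: p /\ c \in b :: q) ->
  (forall c : Z2, c \in a :: p -> conn adj_sq W z c) ->
  forall d : Z2, d \in b :: q -> conn adj_sq W z d.
Proof.
move=> Hq HW [c [Hc1 Hc2]] Hz d Hd.
exact: conn_trans (Hz c Hc1) (conn_in_path adj_sq_sym Hq HW Hc2 Hd).
Qed.

Variables (aM : Z2) (pM : seq Z2).
Hypothesis Hanc : isV M (M + 1) (3 * M) aM pM.
Definition good (c : Z2) : Prop := conn adj_sq W aM c.

Lemma good_anc : forall c : Z2, c \in aM :: pM -> good c.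
Proof.
move=> c Hc; case: Hanc => Hp _ _ _.
exact: conn_mem Hp (isV_W Hanc) Hc.
Qed.

Lemma good_R N : M <= N -> forall a p, isV N (N + 1) (3 * N) a p ->
  forall c : Z2, c \in a :: p -> good c.
Proof.
move=> HN.
have [k ->] : exists k : nat, N = M + k%:Z by exists (absz (N - M)); lia.
elim: k => [|k IH] a p HR.
- have HM : M <= M by lia.
  have [t [ts HT]] := existsH (N := M) (b0 := M + 1) (b1 := 3 * M) HM
    ltac:(lia) ltac:(lia) ltac:(lia) ltac:(lia).
  have HT' : forall c : Z2, c \in t :: ts -> good c.
    case: (HT) => Ht _ _ _.
    apply: share Ht (isH_W HT) _ good_anc.
    apply: meetVH Hanc HT _ _ _ _; lia.
  have E0 : M + 0%:Z = M by lia.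
  rewrite E0 in HR.
  case: (HR) => Hr _ _ _.
  apply: share Hr (isV_W HR) _ HT'.
  have [c [H1 H2]] := meetVH HR HT ltac:(lia) ltac:(lia) ltac:(lia) ltac:(lia).
  by exists c.
- set N1 := M + k.+1%:Z.
  have HN0 : M <= M + k%:Z by lia.
  have [r0 [rs0 HR0]] := existsV (N := M + k%:Z) (a0 := M + k%:Z + 1) (a1 := 3 * (M + k%:Z)) HN0
    ltac:(lia) ltac:(lia) ltac:(lia) ltac:(lia).
  have HN1 : M <= N1 by rewrite /N1; lia.
  have [t [ts HT]] := existsH (N := N1) (b0 := N1 + 1) (b1 := 3 * N1) HN1
    ltac:(lia) ltac:(lia) ltac:(lia) ltac:(lia).
  have HT' : forall c : Z2, c \in t :: ts -> good c.
    case: (HT) => Ht _ _ _.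
    apply: share Ht (isH_W HT) _ (IH _ _ HR0).
    apply: meetVH HR0 HT _ _ _ _; rewrite /N1; lia.
  case: (HR) => Hr _ _ _.
  apply: share Hr (isV_W HR) _ HT'.
  have [c [H1 H2]] := meetVH HR HT ltac:(rewrite /N1; lia) ltac:(rewrite /N1; lia)
    ltac:(rewrite /N1; lia) ltac:(rewrite /N1; lia).
  by exists c.
Qed.

Lemma good_T N : M <= N -> forall a p, isH N (N + 1) (3 * N) a p ->
  forall c : Z2, c \in a :: p -> good c.
Proof.
move=> HN a p HT.
have [r [rs HR]] := existsV (N := N) (a0 := N + 1) (a1 := 3 * N) HN
  ltac:(lia) ltac:(lia) ltac:(lia) ltac:(lia).
case: (HT) => Ht _ _ _.
apply: share Ht (isH_W HT) _ (good_R HN HR).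
apply: meetVH HR HT _ _ _ _; lia.
Qed.

Lemma good_L N : M <= N -> forall a p, isV N (- (3 * N)) (- N - 1) a p ->
  forall c : Z2, c \in a :: p -> good c.
Proof.
move=> HN a p HL.
have [t [ts HT]] := existsH (N := N) (b0 := N + 1) (b1 := 3 * N) HN
  ltac:(lia) ltac:(lia) ltac:(lia) ltac:(lia).
case: (HL) => Hl _ _ _.
apply: share Hl (isV_W HL) _ (good_T HN HT).
have [c [H1 H2]] := meetVH HL HT ltac:(lia) ltac:(lia) ltac:(lia) ltac:(lia).
by exists c.
Qed.

Lemma good_B N : M <= N -> forall a p, isH N (- (3 * N)) (- N - 1) a p ->
  forall c : Z2, c \in a :: p -> good c.
Proof.
move=> HN a p HB.
have [r [rs HR]] := existsV (N := N) (a0 := N + 1) (a1 := 3 * N) HN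
  ltac:(lia) ltac:(lia) ltac:(lia) ltac:(lia).
case: (HB) => Hb _ _ _.
apply: share Hb (isH_W HB) _ (good_R HN HR).
apply: meetVH HR HB _ _ _ _; lia.
Qed.


Definition inbox (N : int) (c : Z2) : bool := (`|c.1| <= N) && (`|c.2| <= N).

Lemma exit_good N x p : M <= N -> path adj_king x p -> inbox N x ->
  ~~ inbox (3 * N) (last x p) -> exists c : Z2, c \in x :: p /\ good c.
Proof.
move=> HN Hp Hx Hl.
have [q [Hq1 Hq2 Hq3 Hq4]] := first_hit adj_king (Q := fun c => ~~ inbox (3 * N) c) (a := x) Hl.
have Hq := Hq1 Hp.
have Hbox : forall c : Z2, c \in x :: q -> (`|c.1| <= 3 * N + 1) && (`|c.2| <= 3 * N + 1).
  move=> c; have -> : x :: q = rcons (belast x q) (last x q) by rewrite lastI.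
  rewrite mem_rcons inE => /orP[/eqP ->|Hc]; last first.
    by have := Hq4 c Hc; rewrite /inbox negbK; lia.
  case: (altP (q =P [::])) => Eq.
    by rewrite Eq /=; move: Hx; rewrite /inbox; lia.
  have [d [Hd Hk]] := last_prev Hq Eq.
  have := Hq4 d Hd; move: Hk; rewrite /inbox negbK.
  case: d {Hd} (last x q) => [a1 a2] [b1 b2]; rewrite /adj_king /=; lia.
have Hsub : forall c : Z2, c \in x :: q -> c \in x :: p by move=> c /Hq3.
have HNpos : 2 <= N by lia.
set L := last x q in Hq2.
have HL : (3 * N < L.1) \/ (L.1 < - (3 * N)) \/ (3 * N < L.2) \/ (L.2 < - (3 * N)).
  by move: Hq2; rewrite /inbox; lia.
move: Hx; rewrite /inbox => /andP[Hx1 Hx2].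
case: HL => [H|[H|[H|H]]].
- have [r [rs HR]] := existsV (N := N) (a0 := N + 1) (a1 := 3 * N) HN
    ltac:(lia) ltac:(lia) ltac:(lia) ltac:(lia).
  case: (HR) => Hr Hr1 Hr2 Hrc.
  have Hgy : forall c : Z2, c \in x :: q -> - (3 * N) - 1 <= c.2 <= 3 * N + 1.
    by move=> c /Hbox; lia.
  have He1 : x.1 < N + 1 /\ 3 * N < (last x q).1 \/ 3 * N < x.1 /\ (last x q).1 < N + 1.
    by left; split; [lia | exact: H].
  have He2 : r.2 < - (3 * N) - 1 /\ 3 * N + 1 <= (last r rs).2 \/
             3 * N + 1 <= r.2 /\ (last r rs).2 < - (3 * N) - 1.
    by left; rewrite Hr1 Hr2; lia.
  have [c [Hc1 Hc2]] := crossing2 Hq Hgy He1 Hr (fun c Hc => let: And3 H _ _ := Hrc c Hc in H) He2.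
  by exists c; split; [exact: Hsub | exact: (good_R HN HR Hc2)].
- have [r [rs HR]] := existsV (N := N) (a0 := - (3 * N)) (a1 := - N - 1) HN
    ltac:(lia) ltac:(lia) ltac:(lia) ltac:(lia).
  case: (HR) => Hr Hr1 Hr2 Hrc.
  have Hgy : forall c : Z2, c \in x :: q -> - (3 * N) - 1 <= c.2 <= 3 * N + 1.
    by move=> c /Hbox; lia.
  have He1 : x.1 < - (3 * N) /\ - N - 1 < (last x q).1 \/ - N - 1 < x.1 /\ (last x q).1 < - (3 * N).
    by right; split; [lia | exact: H].
  have He2 : r.2 < - (3 * N) - 1 /\ 3 * N + 1 <= (last r rs).2 \/
             3 * N + 1 <= r.2 /\ (last r rs).2 < - (3 * N) - 1.
    by left; rewrite Hr1 Hr2; lia.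
  have [c [Hc1 Hc2]] := crossing2 Hq Hgy He1 Hr (fun c Hc => let: And3 H _ _ := Hrc c Hc in H) He2.
  by exists c; split; [exact: Hsub | exact: (good_L HN HR Hc2)].
- have [r [rs HR]] := existsH (N := N) (b0 := N + 1) (b1 := 3 * N) HN
    ltac:(lia) ltac:(lia) ltac:(lia) ltac:(lia).
  case: (HR) => Hr Hr1 Hr2 Hrc.
  have Hgx : forall c : Z2, c \in x :: q -> - (3 * N) - 1 <= c.1 <= 3 * N + 1.
    by move=> c /Hbox; lia.
  have He1 : x.2 < N + 1 /\ 3 * N < (last x q).2 \/ 3 * N < x.2 /\ (last x q).2 < N + 1.
    by left; split; [lia | exact: H].
  have He2 : r.1 < - (3 * N) - 1 /\ 3 * N + 1 <= (last r rs).1 \/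
             3 * N + 1 <= r.1 /\ (last r rs).1 < - (3 * N) - 1.
    by left; rewrite Hr1 Hr2; lia.
  have [c [Hc1 Hc2]] := crossingT Hq Hgx He1 Hr (fun c Hc => let: And3 _ H _ := Hrc c Hc in H) He2.
  by exists c; split; [exact: Hsub | exact: (good_T HN HR Hc2)].
- have [r [rs HR]] := existsH (N := N) (b0 := - (3 * N)) (b1 := - N - 1) HN
    ltac:(lia) ltac:(lia) ltac:(lia) ltac:(lia).
  case: (HR) => Hr Hr1 Hr2 Hrc.
  have Hgx : forall c : Z2, c \in x :: q -> - (3 * N) - 1 <= c.1 <= 3 * N + 1.
    by move=> c /Hbox; lia.
  have He1 : x.2 < - (3 * N) /\ - N - 1 < (last x q).2 \/ - N - 1 < x.2 /\ (last x q).2 < - (3 * N).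
    by right; split; [lia | exact: H].
  have He2 : r.1 < - (3 * N) - 1 /\ 3 * N + 1 <= (last r rs).1 \/
             3 * N + 1 <= r.1 /\ (last r rs).1 < - (3 * N) - 1.
    by left; rewrite Hr1 Hr2; lia.
  have [c [Hc1 Hc2]] := crossingT Hq Hgx He1 Hr (fun c Hc => let: And3 _ H _ := Hrc c Hc in H) He2.
  by exists c; split; [exact: Hsub | exact: (good_B HN HR Hc2)].
Qed.

Lemma unique_comp N x w : M <= N -> W x -> conn adj_sq W x w -> inbox N x ->
  ~~ inbox (3 * N) w -> good x.
Proof.
move=> HN Wx [p [Hp Hl HS]] Hx Hw.
have Hk : path adj_king x p by apply: sub_path Hp => u v; apply: sq_king.
have Hw' : ~~ inbox (3 * N) (last x p) by rewrite Hl.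
have [c [Hc Hg]] := exit_good HN Hk Hx Hw'.
exact: conn_trans Hg (conn_in_path adj_sq_sym Hp HS Hc (mem_head _ _)).
Qed.

Lemma fin_comp N x w : M <= N -> conn adj_king (fun c => ~ good c) x w -> inbox N x ->
  ~~ inbox (3 * N) w -> False.
Proof.
move=> HN [p [Hp Hl HS]] Hx Hw.
have Hw' : ~~ inbox (3 * N) (last x p) by rewrite Hl.
have [c [Hc Hg]] := exit_good HN Hp Hx Hw'.
exact: HS c Hc Hg.
Qed.

Lemma good_far K : exists c, good c /\ K < c.1.
Proof.
set N := Num.max M K.
have HN : M <= N by rewrite /N; lia.
have [r [rs HR]] := existsV (N := N) (a0 := N + 1) (a1 := 3 * N) HN
  ltac:(rewrite /N; lia) ltac:(rewrite /N; lia) ltac:(rewrite /N; lia) ltac:(rewrite /N; lia).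
exists r; split; first exact: (good_R HN HR (mem_head _ _)).
case: HR => _ _ _ /(_ r (mem_head _ _)) [H _ _]; rewrite /N in H *; lia.
Qed.

Lemma good_W c : good c -> W c.
Proof.
case=> p [_ Hl HS]; apply: HS; rewrite -Hl.
exact: mem_last.
Qed.

End Det.

Definition kdirs : seq Z2 :=
  [:: (1, 0); (-1, 0); (0, 1); (0, -1); (1, 1); (1, -1); (-1, 1); (-1, -1)].
Definition nbrs (a : Z2) : seq Z2 := [seq (a.1 + d.1, a.2 + d.2) | d <- kdirs].

Lemma king_nbrs a b : adj_king a b -> b \in nbrs a.
Proof.
case: a b => [a1 a2] [b1 b2]; rewrite /adj_king /nbrs /= => H.
rewrite !inE !xpair_eqE; lia.
Qed.

Fixpoint walks (a : Z2) (n : nat) : seq (seq Z2) :=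
  if n is n'.+1 then flatten [seq [seq b :: p | p <- walks b n'] | b <- nbrs a]
  else [:: [::]].

Lemma size_walks a n : size (walks a n) = (8 ^ n)%N.
Proof.
elim: n a => [|n IH] a; first by [].
change (size (flatten [seq [seq b :: p | p <- walks b n] | b <- nbrs a]) = (8 ^ n.+1)%N).
rewrite size_flatten /shape -map_comp.
have -> : [seq (size \o (fun b : Z2 => [seq b :: p | p <- walks b n])) i | i <- nbrs a]
   = nseq 8 (8 ^ n)%N.
  by rewrite /nbrs /= !size_map !IH.
by rewrite sumn_nseq expnS mulnC.
Qed.

Lemma walks_complete a p : path adj_king a p -> p \in walks a (size p).
Proof.
elim: p a => [|b p IH] a; first by rewrite /= inE.
move=> /andP[Hab Hp].
change (b :: p \in flatten [seq [seq c :: q | q <- walks c (size p)] | c <- nbrs a]).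
apply/flatten_mapP; exists b; first exact: king_nbrs.
by apply: map_f; apply: IH.
Qed.

Lemma walks_size a n p : p \in walks a n -> size p = n.
Proof.
elim: n a p => [|n IH] a p; first by rewrite /= inE => /eqP ->.
change (p \in flatten [seq [seq c :: q | q <- walks c n] | c <- nbrs a] -> size p = n.+1).
by move/flatten_mapP => [b _ /mapP[q /IH Hq ->]] /=; rewrite Hq.
Qed.

Definition boxl (K : nat) : seq Z2 :=
  [seq (i, j) | i <- rng (- K%:Z) K%:Z, j <- rng (- K%:Z) K%:Z].

Lemma size_rng a b : a <= b + 1 -> size (rng a b) = absz (b - a + 1).
Proof. by move=> _; rewrite /rng size_map size_iota. Qed.

Lemma size_boxl K : size (boxl K) = ((2 * K).+1 ^ 2)%N.
Proof.
rewrite /boxl size_allpairs size_rng; last by lia.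
have -> : absz (K%:Z - - K%:Z + 1) = (2 * K).+1 by lia.
by rewrite expnS expn1.
Qed.

Lemma mem_boxl K (a : Z2) : `|a.1| <= K%:Z -> `|a.2| <= K%:Z -> a \in boxl K.
Proof.
case: a => a1 a2 /= H1 H2.
apply: (allpairs_f (fun i j => (i, j))); apply: mem_rng; lia.
Qed.

Definition Lst (K k : nat) : seq (seq Z2) :=
  [seq s <- flatten [seq [seq a :: p | p <- walks a k] | a <- boxl K] | uniq s].

Lemma size_Lst K k : (size (Lst K k) <= (2 * K).+1 ^ 2 * 8 ^ k)%N.
Proof.
rewrite /Lst size_filter (leq_trans (count_size _ _)) //.
rewrite size_flatten /shape -map_comp.
have -> : [seq (size \o (fun a : Z2 => [seq a :: p | p <- walks a k])) i | i <- boxl K]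
   = nseq (size (boxl K)) (8 ^ k)%N.
  elim: (boxl K) => [|b s IH] //=.
  by rewrite IH size_map size_walks.
by rewrite sumn_nseq size_boxl mulnC.
Qed.

Lemma Lst_uniq K k s : s \in Lst K k -> uniq s /\ size s = k.+1.
Proof.
rewrite mem_filter => /andP[Hu /flatten_mapP[a _ /mapP[p /walks_size Hp E]]].
by subst s; split => //; rewrite /= Hp.
Qed.

Lemma Lst_complete K a p : path adj_king a p -> uniq (a :: p) ->
  `|a.1| <= K%:Z -> `|a.2| <= K%:Z -> a :: p \in Lst K (size p).
Proof.
move=> Hp Hu H1 H2; rewrite mem_filter Hu /=.
apply/flatten_mapP; exists a; first exact: mem_boxl.
by apply: map_f; apply: walks_complete.
Qed.



Local Open Scope classical_set_scope.
Local Open Scope ring_scope.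

Lemma q_aux (R : realType) (eps : R) : eps < 1 / 21 -> 0 <= eps ->
  eps * eps <= eps * (1 / 21) -> 256 * (eps * eps) < 1.
Proof. move=> h1 h2 h3; lra. Qed.

Section Prob.
Context (R : realType) (d : measure_display) (T : measurableType d)
  (P : probability T R) (B : T -> set Z2) (eps : R).
Hypothesis mB : forall z : Z2, measurable [set w | B w z].
Hypothesis hrare : rare P B eps.

Definition Gs (s : seq Z2) : set T := [set w | forall c, c \in s -> B w c].

Lemma Gs_meas s : measurable (Gs s).
Proof.
elim: s => [|c s IH].
  have -> : Gs [::] = setT by apply/seteqP; split => w //= _ c; rewrite in_nil.
  exact: measurableT.
have -> : Gs (c :: s) = [set w | B w c] `&` Gs s.
  apply/seteqP; split => w /=.
    by move=> H; split; [apply: H; rewrite mem_head | move=> e He; apply: H; rewrite inE He orbT].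
  by move=> [H1 H2] e; rewrite inE => /orP[/eqP -> //|/H2].
exact: measurableI.
Qed.

Definition Us (L : seq (seq Z2)) : set T := [set w | exists s, s \in L /\ Gs s w].

Lemma Us_cons s L : Us (s :: L) = Gs s `|` Us L.
Proof.
apply/seteqP; split => w /=.
  move=> [t [Ht Hg]]; move: Ht; rewrite inE => /orP[/eqP Et|Ht].
    by left; rewrite -Et.
  by right; exists t.
move=> [Hg|[t [Ht Hg]]]; first by exists s; rewrite mem_head.
by exists t; rewrite inE Ht orbT.
Qed.

Lemma Us_meas L : measurable (Us L).
Proof.
elim: L => [|s L IH].
  have -> : Us [::] = set0 by apply/seteqP; split => w //= [t []]; rewrite in_nil.
  exact: measurable0.
by rewrite Us_cons; apply: measurableU => //; exact: Gs_meas.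
Qed.

Lemma Us_le L x : (forall s, s \in L -> (P (Gs s) <= x%:E)%E) ->
  (P (Us L) <= ((size L)%:R * x)%:E)%E.
Proof.
elim: L => [|s L IH] H.
  have -> : Us [::] = set0 by apply/seteqP; split => w //= [t []]; rewrite in_nil.
  by rewrite measure0 mul0r.
rewrite Us_cons (le_trans (measureU2 _ (Gs_meas s) (Us_meas L))) //.
have -> : ((size (s :: L))%:R * x)%:E = (x%:E + ((size L)%:R * x)%:E)%E.
  by rewrite /= -EFinD mulrSr mulrDl mul1r addrC.
apply: leeD; first by apply: H; rewrite mem_head.
by apply: IH => t Ht; apply: H; rewrite inE Ht orbT.
Qed.

Lemma Gs_le s : uniq s -> (P (Gs s) <= (eps ^+ size s)%:E)%E.
Proof.
move=> Hu; have := hrare.2 [fset x in s]%fset.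
rewrite card_fseq undup_id //.
suff -> : [set w | forall a, a \in [fset x in s]%fset -> B w a] = Gs s by [].
apply/seteqP; split => w /= H c Hc; apply: H; by rewrite ?inE in Hc *.
Qed.


Definition Fn (n : nat) : set T := Us (Lst (5 * n.+1) (2 * n).+1).

Lemma Fn_meas n : measurable (Fn n).
Proof. exact: Us_meas. Qed.

Lemma nat_bound n : ((2 * (5 * n.+1)).+1 ^ 2 * 8 ^ (2 * n).+1 <= 968 * 256 ^ n)%N.
Proof.
have h1 : (n.+1 ^ 2 <= 4 ^ n)%N.
  elim: n => // n IH; rewrite [(4 ^ n.+1)%N]expnS; move: IH; rewrite !expnS !expn0; nia.
have h2 : (8 ^ (2 * n).+1 = 8 * 64 ^ n)%N by rewrite expnS expnM.
have h3 : (256 ^ n = 4 ^ n * 64 ^ n)%N by rewrite -expnMn.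
have h4 : ((2 * (5 * n.+1)).+1 ^ 2 <= 121 * 4 ^ n)%N.
  apply: leq_trans (_ : 121 * n.+1 ^ 2 <= _)%N; last by rewrite leq_mul2l h1 orbT.
  rewrite !expnS !expn0; nia.
rewrite h2 h3 (leq_trans (leq_mul h4 (leqnn (8 * 64 ^ n)))) //.
have -> : (121 * 4 ^ n * (8 * 64 ^ n) = 968 * (4 ^ n * 64 ^ n))%N by rewrite !mulnA (mulnC 121 (4 ^ n)%N) -!mulnA (mulnA 121 8) (mulnCA (4 ^ n)%N).
done.
Qed.

Hypothesis eps01 : 0 <= eps <= 1.

Lemma Fn_le n : (P (Fn n) <= (968 * (256 * eps ^+ 2) ^+ n)%:E)%E.
Proof.
have [e0 e1] := andP eps01.
rewrite /Fn (le_trans (Us_le (x := eps ^+ (2 * n).+2) _)) //.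
  move=> s /Lst_uniq [Hu Hs]; by rewrite -Hs; apply: Gs_le.
rewrite lee_fin.
have Hsz := size_Lst (5 * n.+1) (2 * n).+1.
have Hnat := leq_trans Hsz (nat_bound n).
apply: (le_trans (y := (968 * 256 ^ n)%N%:R * (eps ^+ 2) ^+ n)).
  apply: ler_pM => //; first exact: exprn_ge0.
    by rewrite ler_nat.
  rewrite -exprM -[(2 * n).+2]addn2 exprD -[X in _ <= X]mulr1.
  apply: ler_wpM2l; first exact: exprn_ge0.
  by apply: exprn_ile1.
by rewrite natrM natrX [(256 * _) ^+ n]exprMn mulrA.
Qed.


Hypothesis heps : eps < 1 / 21.

Lemma q_bounds : 0 <= 256 * eps ^+ 2 < 1.
Proof.
have [e0 e1] := andP eps01.
apply/andP; split; first by rewrite mulr_ge0 // exprn_ge0.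
have h : eps * eps <= eps * (1 / 21) by apply: ler_wpM2l => //; exact: ltW.
rewrite expr2; exact: q_aux.
Qed.

Lemma geo_sum : (\sum_(n <oo) ((968 * (256 * eps ^+ 2) ^+ n)%:E) =
  (968 * (1 - 256 * eps ^+ 2)^-1)%:E)%E.
Proof.
set q := 256 * eps ^+ 2.
have [q0 q1] := andP q_bounds.
have Hq : `|q| < 1 by rewrite ger0_norm.
have -> : (fun m => \sum_(0 <= i < m) ((968 * q ^+ i)%:E)%E) = EFin \o series (geometric 968 q).
  apply/funext => m /=; rewrite sumEFin /series /=; done.
rewrite EFin_lim; last exact: is_cvg_geometric_series.
congr EFin; have /(@cvg_unique _ (@Rhausdorff R)) := @cvg_geometric_series _ 968 _ Hq.
by move/(_ _ (@is_cvg_geometric_series _ 968 _ Hq)) => ->.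
Qed.

Lemma sum_fin : (\sum_(n <oo) P (Fn n) < +oo)%E.
Proof.
apply: (le_lt_trans (y := (\sum_(n <oo) ((968 * (256 * eps ^+ 2) ^+ n)%:E))%E)).
  apply: lee_nneseries => [i _ _|n _]; first exact: measure_ge0.
  exact: Fn_le.
by rewrite geo_sum ltry.
Qed.

Lemma bad0 : P (lim_sup_set Fn) = 0%E.
Proof. apply: lim_sup_set_cvg0 => //; [exact: Fn_meas | exact: sum_fin]. Qed.

End Prob.

Lemma eps01_aux (R : realType) (eps : R) : 0 <= eps -> eps < 1 / 21 -> 0 <= eps <= 1.
Proof. move=> h1 h2; apply/andP; split => //; lra. Qed.

Lemma sum_bound (s : seq Z2) (c : Z2) : c \in s -> c.1 <= \sum_(d <- s) `|d.1|.
Proof.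
elim: s => [|e s IH] //; rewrite inE big_cons => /orP[/eqP ->|/IH H].
  apply: le_trans (ler_norm e.1) _; rewrite lerDl.
  by apply: sumr_ge0 => i _; exact: normr_ge0.
by apply: le_trans H _; rewrite lerDr normr_ge0.
Qed.

Lemma far_point (A : set Z2) (K : int) : infinite_set A -> exists y, A y /\ ~~ inbox K y.
Proof.
move=> HA; apply: contrapT => Hn; apply: HA.
apply: (@sub_finite_set _ _ [set` [fset z in boxl (absz K)]%fset]).
  move=> y Ay /=; rewrite inE; apply: mem_boxl.
  - case: (boolP (inbox K y)) => [|Hy]; first by rewrite /inbox; lia.
    by exfalso; apply: Hn; exists y.
  - case: (boolP (inbox K y)) => [|Hy]; first by rewrite /inbox; lia.
    by exfalso; apply: Hn; exists y.
by apply/finite_fsetP; eexists.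
Qed.

Lemma W_asbool (A : set Z2) c : W (fun z => `[< A z >]) c <-> (~` A) c.
Proof. by rewrite /W; split => [/asboolPn|/asboolPn]. Qed.

Lemma conn_W (A : set Z2) e a b :
  conn e (W (fun z => `[< A z >])) a b <-> connected_in e (~` A) a b.
Proof.
split => H.
- by apply: conn_mono H => // c /W_asbool.
- by apply: conn_mono H => // c /W_asbool.
Qed.

Theorem lemma6p2 (R : realType) (d : measure_display) (T : measurableType d)
  (P : probability T R) (B : T -> set Z2) (eps : R) :
  (forall z : Z2, measurable [set w | B w z]) ->
  rare P B eps ->
  eps < 1 / 21 ->
  {ae P, forall w,
    exists I : set Z2,
      [/\ component adj_sq (~` B w) I,
          infinite_set I,
          (forall J, component adj_sq (~` B w) J -> infinite_set J -> J = I) &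
          (forall K, component adj_king (~` I) K -> finite_set K)]}.
Proof.
move=> mB hrare heps.
have eps01 := eps01_aux hrare.1 heps.
have H0 := bad0 mB hrare eps01 heps.
exists (lim_sup_set (Fn B)); split.
- rewrite /lim_sup_set; apply: bigcap_measurable => // k _.
  by apply: bigcup_measurable => j _; exact: Fn_meas.
- exact: H0.
move=> w /=; apply: contra_notP => Hw.
have [m Hm] : exists m, forall j, (m <= j)%N -> ~ Fn B j w.
  apply: contrapT => Hc; apply: Hw => k _.
  apply: contrapT => Hk; apply: Hc; exists k => j Hj Hf; apply: Hk; by exists j.
set blk := fun z => `[< B w z >].
set M : int := (m + 2)%:Z.
have hM : 2 <= M by rewrite /M; lia.
have noLong : forall N : int, M <= N -> forall a p, path adj_king a p -> uniq (a :: p) ->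
    (forall c : Z2, c \in a :: p -> blk c) -> `|a.1| <= 5 * N -> `|a.2| <= 5 * N ->
    (size p)%:Z + 1 < 2 * N.
  move=> N HN a p Hp Hu Hb Ha1 Ha2.
  rewrite ltNge; apply/negP => Hbig.
  set n := (absz N).-1.
  have HNn : N = n.+1%:Z by rewrite /n /M in HN *; lia.
  have Hmn : (m <= n)%N by rewrite /n /M in HN *; lia.
  apply: (Hm n Hmn).
  set p' := take (2 * n).+1 p.
  have Hsz : size p' = (2 * n).+1 by rewrite size_takel //; rewrite HNn in Hbig; lia.
  have Hp' : path adj_king a p' by exact: take_path.
  have Hu' : uniq (a :: p') by have := take_uniq (2 * n).+2 Hu.
  have HL : a :: p' \in Lst (5 * n.+1) (2 * n).+1.
    rewrite -[X in Lst _ X]Hsz; apply: Lst_complete => //; rewrite HNn in Ha1 Ha2; lia.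
  exists (a :: p'); split => // c Hc.
  have : c \in a :: p.
    move: Hc; rewrite inE => /orP[/eqP ->|Hc]; first exact: mem_head.
    by rewrite inE (mem_take Hc) orbT.
  by move/Hb/asboolP.
have [aM [pM Hanc]] := existsV hM noLong (N := M) (a0 := M + 1) (a1 := 3 * M) (lexx M)
  ltac:(lia) ltac:(lia) ltac:(lia) ltac:(lia).
set I := [set y | connected_in adj_sq (~` B w) aM y].
have goodI : forall c, good blk aM c <-> I c by move=> c; exact: conn_W.
exists I; split.
- exists aM; split => //.
  by apply/W_asbool; exact: (isV_W Hanc (mem_head _ _)).
- move=> /finite_fsetP [X HX].
  have [c [Hc Hc1]] := good_far hM noLong Hanc (\sum_(d <- X) `|d.1|).
  have : c \in X.
    have : I c by apply/goodI.
    by rewrite HX.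
  by move/sum_bound; rewrite leNgt Hc1.
- move=> J [x [Hx ->]] HJ.
  set N := Num.max M (Num.max `|x.1| `|x.2|).
  have [y [Jy Hy]] := far_point (3 * N) HJ.
  have Hgx : good blk aM x.
    apply: (unique_comp hM noLong Hanc (N := N) (w := y)) => //.
    + by rewrite /N; lia.
    + by apply/W_asbool.
    + exact: (proj2 (conn_W _ _ _ _) Jy).
    + by rewrite /inbox /N; lia.
  apply/seteqP; split => z /= Hz.
    apply/goodI; exact: conn_trans Hgx (proj2 (conn_W _ _ _ _) Hz).
  apply/(conn_W (B w)).
  exact: conn_trans (conn_sym adj_sq_sym Hgx) ((goodI z).2 Hz).
- move=> K [x [Hx ->]]; apply: contrapT => HK.
  set N := Num.max M (Num.max `|x.1| `|x.2|).
  have [y [Ky Hy]] := far_point (3 * N) HK.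
  apply: (fin_comp hM noLong Hanc (N := N) (x := x) (w := y)) => //.
  + by rewrite /N; lia.
  + by apply: conn_mono Ky => // c /= Hc Hg; apply: Hc; apply/goodI.
  + by rewrite /inbox /N; lia.
Qed.
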